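(* Let $G$ be a graph with no edge $e$ satisfying $|F_e|\ge 4$, no induced chordless cycle on 4 vertices, and no induced path on at least 7 vertices, and let $u,v,w$ be an induced path on three vertices in $G$, with $E_i$ and $j$ defined from $u,v,w$ as in the context. Then $|E_j|\le|E_{j-1}|\le\cdots\le|E_0|$; that is, $|E_i|\le|E_{i-1}|$ for every integer $i$ with $1\le i\le j$ (for all $i\ge1$ if $j=\infty$).
   Context: All graphs are finite, simple and undirected. For an edge $e$ of $G$, $F_e$ denotes the set of all edges $e'$ of $G$ such that $V(e)\cup V(e')$ induces a path on three vertices in $G$. Let $u,v,w$ be an induced path on three vertices ($uv,vw\in E(G)$, $uw\notin E(G)$), and $A=\{u,v,w\}$. $B$ is the set of vertices not in $A$ with exactly one or two neighbors in $A$; $C$ is the set of vertices adjacent to all three vertices of $A$; $D$ is the set of vertices not in $A\cup B\cup C$ with at least one neighbor in $C$. For $i\ge1$, $B_i$ is the set of vertices $x\notin A\cup B\cup C\cup D$ whose distance in $G$ to the set $B$ is exactly $i$; $B_0=B$, $B_{-1}=A$. For $i\ge0$, $E_i$ is the set of edges with one endpoint in $B_i$ and the other in $B_{i+1}$. $j$ is the minimum index $i\ge0$ such that there is an edge $e\in E_i$ with $|F_e|\ge3$, and $j=\infty$ if no such index exists. *)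

(* Defs.v *)
(* A finite simple graph on a finType T is a symmetric,
   irreflexive boolean relation g : rel T. *)
From mathcomp Require Import all_boot.
Set Implicit Arguments. Unset Strict Implicit. Unset Printing Implicit Defensive.

Section GraphDefs.
Variables (T : finType) (g : rel T).

Definition induced_P3 (x y z : T) : bool :=
  [&& uniq [:: x; y; z], g x y, g y z & ~~ g x z].

Definition induces_P3 (S : {set T}) : bool :=
  (#|S| == 3) && [exists x in S, exists y in S, exists z in S, induced_P3 x y z].

Definition induced_path (p : seq T) : Prop :=
  uniq p /\ forall (x0 : T) (i j : nat), i < size p -> j < size p ->
    g (nth x0 p i) (nth x0 p j) = (i.+1 == j) || (j.+1 == i).

Definition induced_C4 (a b c d : T) : Prop :=
  uniq [:: a; b; c; d] /\ g a b /\ g b c /\ g c d /\ g d a /\ ~~ g a c /\ ~~ g b d.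

Definition edges : {set {set T}} :=
  [set S : {set T} | [exists x, exists y, g x y && (S == [set x; y])]].

Definition Fe (e : {set T}) : {set {set T}} :=
  [set e' in edges | induces_P3 (e :|: e')].

Fixpoint ball (X : {set T}) (k : nat) : {set T} :=
  match k with
  | 0 => X
  | k'.+1 => ball X k' :|: [set y | [exists x in ball X k', g x y]]
  end.

Variables (u v w : T).

Definition setA : {set T} := [set u; v; w].
Definition nbA (x : T) : nat := #|[set y in setA | g x y]|.
Definition setB : {set T} := [set x | (x \notin setA) && (0 < nbA x < 3)].
Definition setC : {set T} := [set x | nbA x == 3].
Definition setD : {set T} :=
  [set x | (x \notin setA :|: setB :|: setC) && [exists y in setC, g x y]].

Definition Bi (i : nat) : {set T} :=
  if i is i'.+1 then
    [set x | [&& x \notin setA :|: setB :|: setC :|: setD,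
                 x \in ball setB i & x \notin ball setB i']]
  else setB.

Definition Ei (i : nat) : {set {set T}} :=
  [set S in edges | [exists x in Bi i, exists y in Bi i.+1, S == [set x; y]]].

Definition bad_index (i : nat) : bool := [exists S in Ei i, 3 <= #|Fe S|].

(* j = Some m : j is the minimum index with a bad edge; j = None : j = infinity *)
Definition is_j (j : option nat) : Prop :=
  match j with
  | Some m => bad_index m /\ forall k, k < m -> ~~ bad_index k
  | None => forall k, ~~ bad_index k
  end.

End GraphDefs.

(* Main.v *)
Require Import Defs.
From mathcomp Require Import all_boot.
From mathcomp Require Import zify.
Set Implicit Arguments. Unset Strict Implicit. Unset Printing Implicit Defensive.

Lemma card3 (T0 : finType) (a b c : T0) : uniq [:: a; b; c] -> #|[set a; b; c]| = 3.
Proof.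
rewrite /= !inE negb_or => /andP[/andP[ab ac] /andP[bc _]].
have -> : [set a; b; c] = a |: [set b; c] by apply/setP=> x; rewrite !inE orbA.
by rewrite cardsU1 cards2 !inE negb_or ab ac bc.
Qed.

Lemma card4 (T0 : finType) (a b c d : T0) : uniq [:: a; b; c; d] -> #|[set a; b; c; d]| = 4.
Proof.
rewrite /= !inE !negb_or => /andP[/and3P[ab ac ad] /andP[/andP[bc bd] /andP[cd _]]].
have -> : [set a; b; c; d] = a |: (b |: [set c; d]) by apply/setP=> x; rewrite !inE !orbA.
by rewrite !cardsU1 cards1 !inE !negb_or ab ac ad bc bd cd.
Qed.

Lemma ge3 (T0 : finType) (F : {set T0}) a b c : a \in F -> b \in F -> c \in F ->
  uniq [:: a; b; c] -> 3 <= #|F|.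
Proof.
move=> ha hb hc u; rewrite -(card3 u); apply: subset_leq_card; apply/subsetP=> x.
by rewrite !inE => /orP[/orP[]|] /eqP->.
Qed.

Lemma ge4 (T0 : finType) (F : {set T0}) a b c d : a \in F -> b \in F -> c \in F -> d \in F ->
  uniq [:: a; b; c; d] -> 4 <= #|F|.
Proof.
move=> ha hb hc hd u; rewrite -(card4 u); apply: subset_leq_card; apply/subsetP=> x.
by rewrite !inE => /orP[/orP[/orP[]|]|] /eqP->.
Qed.

Lemma neq_wit (T0 : finType) (S1 S2 : {set T0}) x : x \in S1 -> x \notin S2 -> S1 != S2.
Proof. by move=> h1 h2; apply/eqP=> e; rewrite -e h1 in h2. Qed.
Section Main.
Variables (T : finType) (g : rel T).
Hypotheses (g_sym : symmetric g) (g_irr : irreflexive g).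
Hypothesis noF4 : forall e, e \in edges g -> #|Fe g e| < 4.
Variables (u v w : T).
Hypothesis huvw : induced_P3 g u v w.

Local Notation A := (setA u v w).
Local Notation B := (setB g u v w).
Local Notation C := (Defs.setC g u v w).
Local Notation D := (Defs.setD g u v w).
Local Notation ball := (ball g B).
Local Notation Bi := (Bi g u v w).

Lemma gneq x y : g x y -> x != y.
Proof. by move=> h; apply/eqP=> e; rewrite e g_irr in h. Qed.

Lemma edgeP x y : g x y -> [set x; y] \in edges g.
Proof.
move=> h; rewrite inE; apply/existsP; exists x; apply/existsP; exists y.
by rewrite h eqxx.
Qed.

Lemma P3_Fe a b c : induced_P3 g a b c ->
  [set b; c] \in Fe g [set a; b] /\ [set a; b] \in Fe g [set b; c].
Proof.
move=> h; have /and4P[uq ab bc nac] := h.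
have U1 : [set a; b] :|: [set b; c] = [set a; b; c].
  by apply/setP=> x; rewrite !inE; case: (x == a); case: (x == b); case: (x == c).
have U2 : [set b; c] :|: [set a; b] = [set a; b; c] by rewrite setUC.
have P : induces_P3 g [set a; b; c].
  rewrite /induces_P3 card3 //=.
  apply/existsP; exists a; apply/andP; split; first by rewrite !inE eqxx.
  apply/existsP; exists b; apply/andP; split; first by rewrite !inE eqxx orbT.
  apply/existsP; exists c; apply/andP; split; first by rewrite !inE eqxx orbT.
  exact: h.
by split; rewrite inE ?U1 ?U2 P andbT; apply: edgeP.
Qed.

Lemma cardA : #|A| = 3.
Proof. by rewrite /setA card3 //; case/and4P: huvw. Qed.

Lemma nbA_le3 x : nbA g u v w x <= 3.
Proof.
rewrite /nbA -cardA; apply: subset_leq_card; apply/subsetP=> y; rewrite inE.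
by case/andP.
Qed.

Lemma nbA3 c a : nbA g u v w c = 3 -> a \in A -> g c a.
Proof.
move=> h aA; apply/negPn/negP => nca.
have: [set y in A | g c y] \subset A :\ a.
  apply/subsetP => y; rewrite !inE => /andP[yA gy].
  rewrite yA andbT; apply/eqP=> ya; by rewrite -ya gy in nca.
move/subset_leq_card; rewrite -/(nbA g u v w c) h.
have := cardsD1 a A; rewrite aA cardA; lia.
Qed.

Lemma nbA0 x : x \notin A -> x \notin B -> x \notin C ->
  forall a, a \in A -> ~~ g x a.
Proof.
move=> xA xB xC a aA; apply/negP=> gxa.
have pos : 0 < nbA g u v w x.
  rewrite /nbA card_gt0; apply/set0Pn; exists a; by rewrite inE aA gxa.
have := nbA_le3 x; move: xB xC; rewrite inE xA pos /= inE => xB /eqP xC.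
lia.
Qed.

Lemma ball_sub k : ball k \subset ball k.+1.
Proof. exact: subsetUl. Qed.

Lemma ball_mono a b : a <= b -> ball a \subset ball b.
Proof.
move=> /subnK <-; elim: (b - a) => [|n IH] //=.
exact: subset_trans IH (ball_sub _).
Qed.

Lemma ballS x y k : x \in ball k -> g x y -> y \in ball k.+1.
Proof.
move=> hx gxy; rewrite /= inE; apply/orP; right; rewrite inE.
by apply/existsP; exists x; rewrite hx gxy.
Qed.

Lemma ballSP y k : y \in ball k.+1 -> y \in ball k \/ exists2 x, x \in ball k & g x y.
Proof.
rewrite /= !inE => /orP[->|/existsP[x /andP[hx gx]]]; first by left.
by right; exists x.
Qed.

Lemma BiSP k y : y \in Bi k.+1 ->
  [/\ y \notin A, y \notin B, y \notin C & y \notin D].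
Proof.
by rewrite inE !in_setU !negb_or => /and3P[/andP[/andP[/andP[nA nB] nC] nD] b1 b0].
Qed.

Lemma BiSB k y : y \in Bi k.+1 -> y \in ball k.+1 /\ y \notin ball k.
Proof. by rewrite inE => /and3P[_ b1 b0]. Qed.

Lemma Bi_ball i x : x \in Bi i -> x \in ball i.
Proof. by case: i => [//|i] /BiSB[]. Qed.

Lemma Bi_disj a b x : x \in Bi a -> x \in Bi b -> a = b.
Proof.
suff H : forall a b, a < b -> x \in Bi a -> x \in Bi b -> False.
  move=> ha hb; case: (ltngtP a b) => // ab; [case: (H a b) | case: (H b a)] => //.
move=> a' [//|b'] ab ha /BiSB[_ nb].
have := Bi_ball ha => /(subsetP (ball_mono (ab : a' <= b'))) hb.
by rewrite hb in nb.
Qed.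

Lemma notU (x : T) (X Y : {set T}) : x \notin X :|: Y -> x \notin X /\ x \notin Y.
Proof. by rewrite in_setU negb_or => /andP. Qed.

Lemma notadjA k y a : y \in Bi k.+1 -> a \in A -> ~~ g y a.
Proof. by case/BiSP=> nA nB nC _; apply: nbA0. Qed.

Lemma notadjC k y c : y \in Bi k.+1 -> c \in C -> ~~ g y c.
Proof.
case/BiSP=> nA nB nC nD cC; apply/negP=> gyc.
move: nD; rewrite inE.
have -> : y \notin A :|: B :|: C by rewrite in_setU negb_or nC andbT in_setU negb_or nA nB.
by move/existsP; apply; exists c; rewrite cC gyc.
Qed.

Lemma notadjD k y d : y \in Bi k.+1 -> d \in D -> ~~ g d y.
Proof.
move=> hy; rewrite inE => /andP[/notU[/notU[dA dB] dC]].
move=> /existsP[c /andP[cC gdc]]; apply/negP=> gdy.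
have c3 : nbA g u v w c = 3 by move: cC; rewrite inE => /eqP.
have gca a : a \in A -> g c a by apply: nbA3.
have nda a : a \in A -> ~~ g d a by apply: nbA0.
have ncy : ~~ g c y by rewrite g_sym; apply: notadjC hy cC.
have uA : u \in A by rewrite !inE eqxx.
have vA : v \in A by rewrite !inE eqxx orbT.
have wA : w \in A by rewrite !inE eqxx orbT.
have cd : c != d by rewrite eq_sym gneq.
have cA a : a \in A -> c != a by move=> aA; apply: gneq; apply: gca.
have dA' a : a \in A -> d != a by move=> aA; apply/eqP=> e; rewrite -e in aA; rewrite aA in dA.
have P a : a \in A -> [set c; a] \in Fe g [set c; d].
  move=> aA; rewrite [[set c; d]]setUC; apply: (proj1 (P3_Fe _)).
  apply/and4P; split; [|exact: gdc|exact: gca|exact: nda].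
  by rewrite /= !inE !negb_or (eq_sym d c) cd dA' // cA.
have cy : c != y.
  apply/eqP=> e; case/BiSP: hy => _ _ nC _; by rewrite -e cC in nC.
have Py : [set d; y] \in Fe g [set c; d].
  apply: (proj1 (P3_Fe _)).
  apply/and4P; split; [|by rewrite g_sym|exact: gdy|exact: ncy].
  by rewrite /= !inE !negb_or cd cy gneq.
have huv := huvw; case/and4P: huv; rewrite /= !inE !negb_or => /andP[/andP[uv uw] /andP[vw _]] _ _ _.
have := noF4 (edgeP (gdc : g d c)); rewrite setUC; apply/negP; rewrite -leqNgt.
apply: (ge4 (P u uA) (P v vA) (P w wA) Py).
have uc : u != c by rewrite eq_sym cA.
have vc : v != c by rewrite eq_sym cA.
have wc : w != c by rewrite eq_sym cA.
have n1 : [set c; u] != [set c; v].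
  by apply: (neq_wit (x := u)); rewrite !inE ?eqxx ?orbT // negb_or uc uv.
have n2 : [set c; u] != [set c; w].
  by apply: (neq_wit (x := u)); rewrite !inE ?eqxx ?orbT // negb_or uc uw.
have n3 : [set c; v] != [set c; w].
  by apply: (neq_wit (x := v)); rewrite !inE ?eqxx ?orbT // negb_or vc vw.
have n4 a : [set c; a] != [set d; y].
  by apply: (neq_wit (x := c)); rewrite !inE ?eqxx ?orbT // negb_or cd cy.
by rewrite /= !inE !negb_or n1 n2 n3 !n4.
Qed.

Lemma pred_exists k y : y \in Bi k.+1 -> exists2 x, x \in Bi k & g x y.
Proof.
move=> hy; have [b1 b0] := BiSB hy.
case: (ballSP b1) => [h|[x hx gxy]]; first by rewrite h in b0.
exists x => //; case: k hx b0 hy {b1} => [//|k] hx b0 hy.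
case: (ballSP hx) => [hx'|_].
  by have := ballS hx' gxy; rewrite (negbTE b0).
have [nA nB nC nD] := BiSP hy.
rewrite inE hx /=.
apply/andP; split; last first.
  by apply/negP=> hx'; have := ballS hx' gxy; rewrite (negbTE b0).
have xA : x \notin A by apply/negP=> xA; have := notadjA hy xA; rewrite g_sym gxy.
have xB : x \notin B.
  apply/negP=> xB; have : x \in ball k := subsetP (ball_mono (leq0n k)) x xB.
  by move=> h; have := ballS h gxy; rewrite (negbTE b0).
have xC : x \notin C by apply/negP=> xC; have := notadjC hy xC; rewrite g_sym gxy.
have xD : x \notin D by apply/negP=> xD; have := notadjD hy xD; rewrite gxy.
by rewrite in_setU negb_or xD andbT in_setU negb_or xC andbT in_setU negb_or xA xB.
Qed.

Lemma back_nb k x y : x \in Bi k -> y \in Bi k.+1 -> g x y ->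
  exists p, [/\ g p x, ~~ g p y & p != y].
Proof.
move=> hx hy gxy; case: k hx hy => [|k] hx hy.
  have := hx; rewrite inE => /andP[_ /andP[pos _]].
  move: pos; rewrite /nbA card_gt0 => /set0Pn[a]; rewrite inE => /andP[aA gxa].
  exists a; split; first by rewrite g_sym.
    by rewrite g_sym; apply: notadjA hy aA.
  apply/eqP=> ay; have [nA _ _ _] := BiSP hy; by rewrite -ay aA in nA.
have [b1 b0] := BiSB hx; have [c1 c0] := BiSB hy.
case: (ballSP b1) => [h|[p hp gpx]]; first by rewrite h in b0.
exists p; split => //.
  by apply/negP=> gpy; have := ballS hp gpy; rewrite (negbTE c0).
apply/eqP=> py; rewrite -py in c0.
by have := subsetP (ball_sub k) p hp; rewrite (negbTE c0).
Qed.

Lemma Ei_bad k x y : x \in Bi k -> y \in Bi k.+1 -> g x y -> ~~ bad_index g u v w k ->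
  #|Fe g [set x; y]| < 3.
Proof.
move=> hx hy gxy nb; rewrite ltnNge; apply/negP=> h; move/negP: nb; apply.
apply/existsP; exists [set x; y]; rewrite h andbT inE edgeP //=.
apply/existsP; exists x; rewrite hx /=; apply/existsP; exists y; by rewrite hy eqxx.
Qed.

Lemma uniq_next k x y z1 z2 : ~~ bad_index g u v w k ->
  x \in Bi k -> y \in Bi k.+1 -> g x y ->
  z1 \in Bi k.+2 -> z2 \in Bi k.+2 -> g y z1 -> g y z2 -> z1 = z2.
Proof.
move=> nb hx hy gxy hz1 hz2 g1 g2.
have [p [gpx npy py]] := back_nb hx hy gxy.
have xy : x != y by apply: gneq.
have PF1 : [set p; x] \in Fe g [set x; y].
  apply: (proj2 (P3_Fe _)); apply/and4P; split => //.
  by rewrite /= !inE !negb_or gneq // py xy.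
have xz z : z \in Bi k.+2 -> x != z.
  by move=> hz; apply/eqP=> e; rewrite -e in hz; have /eqP := Bi_disj hx hz; by elim: (k).
have yz z : z \in Bi k.+2 -> y != z.
  by move=> hz; apply/eqP=> e; rewrite -e in hz; have /eqP := Bi_disj hy hz; by elim: (k).
have nxz z : z \in Bi k.+2 -> ~~ g x z.
  move=> hz; apply/negP=> gxz; have [_ z0] := BiSB hz.
  by have := ballS (Bi_ball hx) gxz; rewrite (negbTE z0).
have PF2 z : z \in Bi k.+2 -> g y z -> [set y; z] \in Fe g [set x; y].
  move=> hz gyz; apply: (proj1 (P3_Fe _)); apply/and4P; split => //; last exact: nxz.
  by rewrite /= !inE !negb_or xy xz // yz.
case: (eqVneq z1 z2) => [//|nz].
exfalso; have := Ei_bad hx hy gxy nb; rewrite ltnNge => /negP; apply.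
apply: (ge3 PF1 (PF2 _ hz1 g1) (PF2 _ hz2 g2)).
have n2 z : z \in Bi k.+2 -> [set p; x] != [set y; z].
  move=> hz; apply: (neq_wit (x := x)); first by rewrite !inE eqxx orbT.
  by rewrite !inE negb_or xy xz.
have n3 : [set y; z1] != [set y; z2].
  apply: (neq_wit (x := z1)); first by rewrite !inE eqxx orbT.
  by rewrite !inE negb_or nz andbT eq_sym yz.
by rewrite /= !inE !negb_or n2 // n2 // n3.
Qed.

Lemma edge_g x y a b : [set x; y] = [set a; b] -> g a b -> x != y -> g x y.
Proof.
move=> E gab xy.
have hx : x \in [set a; b] by rewrite -E !inE eqxx.
have hy : y \in [set a; b] by rewrite -E !inE eqxx orbT.
move: xy hx hy; rewrite !inE => xy /orP[]/eqP ex /orP[]/eqP ey; move: xy; rewrite ex ey ?eqxx //= => _.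
by rewrite g_sym.
Qed.

Lemma Ei_mem k S : S \in Ei g u v w k ->
  exists x y, [/\ S = [set x; y], x \in Bi k, y \in Bi k.+1 & g x y].
Proof.
rewrite inE => /andP[hS /existsP[x /andP[hx /existsP[y /andP[hy /eqP Sxy]]]]].
exists x, y; split => //.
move: hS; rewrite inE => /existsP[a /existsP[b /andP[gab /eqP Sab]]].
apply: (edge_g (a := a) (b := b)); first by rewrite -Sxy.
  done.
apply/eqP=> e; rewrite -e in hy; have /eqP := Bi_disj hx hy; by elim: (k).
Qed.

Lemma step1 k : ~~ bad_index g u v w k -> #|Ei g u v w k.+1| <= #|Bi k.+1|.
Proof.
move=> nb.
pose f (S : {set T}) := odflt u [pick y in S :&: Bi k.+1].
have fE S y z : S = [set y; z] -> y \in Bi k.+1 -> z \in Bi k.+2 -> f S = y.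
  move=> E hy hz; rewrite /f; case: pickP => [y0|none].
    rewrite in_setI E in_set2 => /andP[/orP[]/eqP -> // h].
    have /eqP := Bi_disj h hz; by elim: (k).
  by have := none y; rewrite in_setI E in_set2 eqxx hy.
have inj : {in Ei g u v w k.+1 &, injective f}.
  move=> S1 S2 /Ei_mem[y1 [z1 [E1 hy1 hz1 g1]]] /Ei_mem[y2 [z2 [E2 hy2 hz2 g2]]].
  rewrite (fE _ _ _ E1) // (fE _ _ _ E2) // => e; subst y2.
  have [x hx gxy] := pred_exists hy1.
  by rewrite E1 E2 (uniq_next nb hx hy1 gxy hz1 hz2 g1 g2).
rewrite -(card_in_imset inj); apply: subset_leq_card; apply/subsetP=> _ /imsetP[S hS ->].
by have [y [z [E hy hz _]]] := Ei_mem hS; rewrite (fE _ _ _ E).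
Qed.

Lemma step2 k : #|Bi k.+1| <= #|Ei g u v w k|.
Proof.
pose h y := [set odflt u [pick x in Bi k | g x y]; y].
have hE y : y \in Bi k.+1 -> exists2 x, x \in Bi k /\ g x y & h y = [set x; y].
  move=> hy; rewrite /h; case: pickP => [x /andP[hx gxy]|none] /=.
    by exists x.
  have [x hx gxy] := pred_exists hy; by have := none x; rewrite /= hx gxy.
have inj : {in Bi k.+1 &, injective h}.
  move=> y1 y2 h1 h2 e.
  have [x2 [hx2 _] E2] := hE _ h2.
  have : y1 \in h y2 by rewrite -e /h !inE eqxx orbT.
  rewrite E2 !inE => /orP[/eqP ex|/eqP //].
  rewrite ex in h1; have /eqP := Bi_disj hx2 h1; by elim: (k).
rewrite -(card_in_imset inj); apply: subset_leq_card; apply/subsetP=> _ /imsetP[y hy ->].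
have [x [hx gxy] ->] := hE _ hy.
rewrite inE edgeP //=; apply/existsP; exists x; rewrite hx /=.
by apply/existsP; exists y; rewrite hy eqxx.
Qed.

End Main.

Theorem corollary1 (T : finType) (g : rel T)
  (g_sym : symmetric g) (g_irr : irreflexive g)
  (noF4 : forall e, e \in edges g -> #|Fe g e| < 4)
  (noC4 : forall a b c d : T, ~ induced_C4 g a b c d)
  (noP7 : forall p : seq T, induced_path g p -> size p < 7)
  (u v w : T) (huvw : induced_P3 g u v w)
  (j : option nat) (hj : is_j g u v w j) :
  forall i : nat, 1 <= i ->
    (if j is Some m then i <= m else true) ->
    #|Ei g u v w i| <= #|Ei g u v w i.-1|.
Proof.
case=> [//|k] _ hi /=.
have nb : ~~ bad_index g u v w k.
  by case: j hj hi => [m [_ H] hi|H _]; [apply: H | apply: H].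
apply: leq_trans (step1 g_sym g_irr noF4 huvw nb) (step2 g_sym g_irr noF4 huvw k).
Qed.
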